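(* For distinct $a,b,c,d$, in $A(\mathcal{H}^+)$: (i) $\mathcal{M}_{ab}*\bar{\mathcal{M}}_{cd}=0$ and $\bar{\mathcal{M}}_{cd}*\mathcal{M}_{ab}=0$; (ii) $[\Lambda_{ab}]*[\Lambda_{cd}]=[S_{ab}]*[S_{cd}]$.
   Context: $\mathfrak{h}$ is an $\ell$-dimensional complex space with orthonormal basis $h_1,\dots,h_\ell$; $\mathcal{H}=M(1,0)$ the free bosonic vertex operator algebra generated by Heisenberg modes $h(n)$ on vacuum $\mathbf{1}$; $\mathcal{H}^+$ the fixed points of the automorphism induced by $h\mapsto-h$; $A(\mathcal{H}^+)=\mathcal{H}^+/O(\mathcal{H}^+)$ Zhu's algebra ($O$ spanned by $u\circ v=\sum_{i\ge0}\binom{\mathrm{wt}\,u}{i}u_{i-2}v$, product induced by $u*v=\sum_{i\ge0}\binom{\mathrm{wt}\,u}{i}u_{i-1}v$), $[u]=u+O(\mathcal{H}^+)$. For distinct $x,y$: $S_{xy}(1,m)=h_x(-1)h_y(-m)\mathbf{1}$, $S_{xy}=S_{xy}(1,1)$, $E^u_{xy}=5S_{xy}(1,2)+25S_{xy}(1,3)+36S_{xy}(1,4)+16S_{xy}(1,5)$, $E^t_{xy}=-16\big(3S_{xy}(1,2)+14S_{xy}(1,3)+19S_{xy}(1,4)+8S_{xy}(1,5)\big)$, $\Lambda_{xy}=45S_{xy}(1,2)+190S_{xy}(1,3)+240S_{xy}(1,4)+96S_{xy}(1,5)$. $\mathcal{M}_{xy}$ is the span of $[E^u_{xy}],[E^u_{yx}],[E^t_{xy}],[E^t_{yx}]$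 and $\bar{\mathcal{M}}_{xy}=\mathcal{M}_{xy}+\mathbb{C}[\Lambda_{xy}]$. *)

(* Defs.v *)
(* Heisenberg VOA M(1,0) of rank l over C = R[i]
   (R = Stdlib reals, complex numbers from mathcomp-real-closed),
   realised as the polynomial algebra {malg C[{cmonom Var}]} in the
   variables x_(i,n) <-> h_i(-(n+1)), i : 'I_l, n : nat. *)
From HB Require Import structures.
From mathcomp Require Import all_boot all_order all_algebra.
From mathcomp Require Import reals Rstruct complex.
From mathcomp Require Import finmap.
From mathcomp.multinomials Require Import monalg.

Set Implicit Arguments.
Unset Strict Implicit.
Unset Printing Implicit Defensive.

Import Order.TTheory GRing.Theory Num.Theory.
Local Open Scope ring_scope.

Definition C : numClosedFieldType := complex Rdefinitions.R.

Section Heisenberg.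
Variable l : nat.

(* variable (i, n) stands for the creation mode h_i(-(n+1)) *)
Definition Var : choiceType := ('I_l * nat)%type.
Definition Mon : choiceType := cmonom Var.
Definition Fock := {malg C[Mon]}.

Definition vars (m : Mon) : seq Var :=
  flatten [seq nseq (m j) j | j <- finsupp (cmonom_val m)].

Definition wtl (s : seq Var) : nat := sumn [seq j.2.+1 | j <- s].
Definition wtm (m : Mon) : nat := wtl (vars m).
Definition wtmax (v : Fock) : nat := \max_(m <- msupp v) wtm m.

Definition xmul (j : Var) (v : Fock) : Fock := << ucm j >> * v.
Definition xder (j : Var) (v : Fock) : Fock :=
  \sum_(m <- msupp v) (v@_m * (m j)%:R) *: << divcm m (ucm j) >>.

(* the Heisenberg modes h_i(k), k : int, acting on M(1,0) with
   [h_i(m), h_j(n)] = m delta_ij delta_(m+n,0) and h_i(0) = 0 *)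
Definition hmode (i : 'I_l) (k : int) (v : Fock) : Fock :=
  match k with
  | Posz 0 => 0
  | Posz n.+1 => n.+1%:R *: xder (i, n) v
  | Negz n => xmul (i, n) v
  end.

(* modes w_p of the vertex operator Y(w,z) = sum_p w_p z^(-p-1) of the
   monomial vector w = h_(i1)(-n1-1) ... h_(ir)(-nr-1) 1 given by the
   list [:: (i1,n1); ...; (ir,nr)], via the normal ordered product
   (h(-n-1)w)_p = sum_(k<0) binom(-k-1,n) h(k) w_(p-k-n-1)
                + sum_(k>=0) binom(-k-1,n) w_(p-k-n-1) h(k);
   the (finitely many nonzero) terms are summed over ranges that are
   large enough by weight considerations. *)
Fixpoint ymodeL (s : seq Var) (p : int) (v : Fock) : Fock :=
  match s with
  | [::] => if p == -1 then v else 0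
  | (i, n) :: s' =>
      \sum_(K < `|Posz (wtl s' + wtmax v + n) - p|%N.+1)
         'C(K, n)%:R *: hmode i (Negz K) (ymodeL s' (p + K%:Z - n%:Z) v)
    + \sum_(k < (wtmax v).+1)
         ((-1) ^+ n * 'C(k + n, n)%:R) *:
            ymodeL s' (p - k%:Z - n%:Z - 1) (hmode i k%:Z v)
  end.

Definition ymode (m : Mon) (p : int) (v : Fock) : Fock := ymodeL (vars m) p v.

Definition Ymode (u : Fock) (p : int) (v : Fock) : Fock :=
  \sum_(m <- msupp u) u@_m *: ymode m p v.

Definition homog (u : Fock) (d : nat) : Prop :=
  forall m, m \in msupp u -> wtm m = d.

(* Zhu's products for a monomial u (homogeneous of weight wtm u),
   extended bilinearly *)
Definition starm (m : Mon) (v : Fock) : Fock :=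
  \sum_(i < (wtm m).+1) 'C(wtm m, i)%:R *: ymode m (i%:Z - 1) v.
Definition circm (m : Mon) (v : Fock) : Fock :=
  \sum_(i < (wtm m).+1) 'C(wtm m, i)%:R *: ymode m (i%:Z - 2) v.
Definition zstar (u v : Fock) : Fock := \sum_(m <- msupp u) u@_m *: starm m v.
Definition zcirc (u v : Fock) : Fock := \sum_(m <- msupp u) u@_m *: circm m v.

(* the automorphism theta induced by h |-> -h, and H^+ its fixed points *)
Definition theta (v : Fock) : Fock :=
  \sum_(m <- msupp v) ((-1) ^+ mdeg m * v@_m) *: << m >>.
Definition Hplus (v : Fock) : Prop := theta v = v.

Definition OHplus (x : Fock) : Prop :=
  exists s : seq (Fock * Fock),
    (forall uv, uv \in s ->
       [/\ Hplus uv.1, exists d, homog uv.1 d & Hplus uv.2])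
    /\ x = \sum_(uv <- s) zcirc uv.1 uv.2.

(* S_xy(1,m) = h_x(-1) h_y(-m) 1  (m >= 1) *)
Definition Sv (x y : 'I_l) (m : nat) : Fock :=
  << mulcm (ucm ((x, 0%N) : Var)) (ucm ((y, m.-1) : Var)) >>.
Definition Sxy (x y : 'I_l) : Fock := Sv x y 1.

Definition Eu (x y : 'I_l) : Fock :=
  5%:R *: Sv x y 2 + 25%:R *: Sv x y 3 + 36%:R *: Sv x y 4 + 16%:R *: Sv x y 5.
Definition Et (x y : 'I_l) : Fock :=
  (- 16%:R) *: (3%:R *: Sv x y 2 + 14%:R *: Sv x y 3 + 19%:R *: Sv x y 4
                + 8%:R *: Sv x y 5).
Definition Lam (x y : 'I_l) : Fock :=
  45%:R *: Sv x y 2 + 190%:R *: Sv x y 3 + 240%:R *: Sv x y 4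
  + 96%:R *: Sv x y 5.

(* representatives of elements of M_xy = span [E^u_xy],[E^u_yx],[E^t_xy],[E^t_yx] *)
Definition inM (x y : 'I_l) (v : Fock) : Prop :=
  exists c1 c2 c3 c4 : C,
    v = c1 *: Eu x y + c2 *: Eu y x + c3 *: Et x y + c4 *: Et y x.
(* representatives of elements of Mbar_xy = M_xy + C [Lambda_xy] *)
Definition inMbar (x y : 'I_l) (v : Fock) : Prop :=
  exists w (c : C), inM x y w /\ v = w + c *: Lam x y.

End Heisenberg.

(* Main.v *)
Require Import Defs.
From HB Require Import structures.
From mathcomp Require Import all_boot all_order all_algebra.
From mathcomp Require Import reals Rstruct complex.
From mathcomp Require Import finmap.
From mathcomp.multinomials Require Import monalg.
From mathcomp Require Import ring zify.
Import GRing.Theory.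
Local Open Scope ring_scope.
Set Warnings "-notation-overridden,-ambiguous-paths,-notation-incompatible-prefix".
Section Dev.
Variable l : nat.
Local Notation F := (Fock l).
Local Notation Mn := (Mon l).
Local Notation VV := (Var l).
Definition X (j : VV) : F := << ucm j >>.

Lemma monU1M (m1 m2 : Mn) : (<< mulcm m1 m2 >> : F) = << m1 >> * << m2 >>.
Proof. by rewrite malgM_def fgmulUU mulr1. Qed.

Lemma malgUZ (c : C) (m : Mn) : (<< c *g m >> : F) = c *: << m >>.
Proof.
apply/malgP=> k; rewrite mcoeffZ [X in _ = _ * X]mcoeffU [X in X = _]mcoeffU.
by case: eqP => _; rewrite ?mulr1 ?mulr0.
Qed.

Definition lin (G : Mn -> F) (u : F) : F := \sum_(m <- msupp u) u@_m *: G m.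

Lemma linEw G {u} {d : {fset Mn}} : (msupp u `<=` d)%fset ->
  lin G u = \sum_(m <- d) u@_m *: G m.
Proof.
move=> le; rewrite /lin (big_fset_incl _ le) // => m _ mN.
by rewrite (mcoeff_outdom mN) scale0r.
Qed.

Lemma linD G u v : lin G (u + v) = lin G u + lin G v.
Proof.
rewrite (linEw G (msuppD_le u v)).
rewrite (linEw G (fsubsetUl (msupp u) (msupp v))).
rewrite (linEw G (fsubsetUr (msupp u) (msupp v))).
by rewrite -big_split /=; apply eq_bigr => m _; rewrite mcoeffD scalerDl.
Qed.

Lemma linZ G c u : lin G (c *: u) = c *: lin G u.
Proof.
rewrite (linEw G (msuppZ_le c u)) /lin scaler_sumr.
by apply eq_bigr => m _; rewrite mcoeffZ scalerA.
Qed.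

Lemma lin0 G : lin G 0 = 0.
Proof. by rewrite /lin msupp0 big_seq_fset0. Qed.

Lemma linU G m : lin G << m >> = G m.
Proof. by rewrite /lin msuppU1 big_seq_fset1 mcoeffUU scale1r. Qed.

Lemma zstar_lin u v : zstar u v = lin (fun m => starm m v) u.
Proof. by []. Qed.
Lemma zcirc_lin u v : zcirc u v = lin (fun m => circm m v) u.
Proof. by []. Qed.
Lemma theta_lin v : theta v = lin (fun m => (-1) ^+ mdeg m *: << m >>) v.
Proof. by apply eq_bigr => m _; rewrite scalerA mulrC. Qed.


Fixpoint E (s : seq VV) (j : nat) : F :=
  match s with
  | [::] => (j == 0%N)%:R
  | (i, n) :: s' => \sum_(r < j.+1) 'C((n + r)%N, n)%:R *: (X (i, (n + r)%N) * E s' (j - r)%N)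
  end.

Definition avoid (I : pred 'I_l) (v : F) :=
  forall m, m \in msupp v -> forall j : VV, I j.1 -> m j = 0%N.

Lemma avoid0 (I : pred (ordinal l)) : avoid I 0.
Proof. by move=> m; rewrite msupp0 in_fset0. Qed.

Lemma hmode_avoid (I : pred (ordinal l)) i (k : nat) (v : F) : I i -> avoid I v -> hmode i k v = 0.
Proof.
move=> Ii av; case: k => [|n] //=.
rewrite /xder big1_seq ?scaler0 // => m /andP[_ Hm].
by rewrite (av m Hm (i, n) Ii) mulr0 scale0r.
Qed.

Lemma ymodeL_closed (I : pred (ordinal l)) (s : seq VV) : all (fun j : VV => I j.1) s ->
  forall p v, avoid I v ->
  ymodeL s p v = match p with Posz _ => 0 | Negz j => E s j * v end.
Proof.
elim: s => [|[i n] s IH] => [_|/andP[Ii Is]] p v av; cbn [ymodeL E].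
  case: p => [p|[|j]] //=; first by rewrite mul1r.
  by rewrite mul0r.
have Y0 q : ymodeL s q 0 = 0.
  by rewrite (IH Is q 0 (avoid0 I)); case: q => q; rewrite ?mulr0.
rewrite [X in _ + X = _]big1 ?addr0; last first.
  by move=> k _; rewrite (hmode_avoid _ _ _ _ Ii av) Y0 scaler0.
case: p => [p0|j].
  rewrite big1 // => K _.
  have [Kn|nK] := ltnP K n; first by rewrite bin_small // scale0r.
  have -> : (Posz p0 + (K : nat)%:Z - n%:Z = (p0 + K - n)%N%:Z)%R by lia.
  by rewrite IH // /hmode /xmul mulr0 scaler0.
set N := `|_|%N.
have HN : (n + j < N.+1)%N by rewrite /N; lia.
pose h K := 'C(K, n)%:R *: (X (i, K) * E s (n + j - K)) * v.
rewrite (eq_bigr (fun K : 'I_N.+1 => if (n <= K <= n + j)%N then h K else 0)); last first.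
  move=> K _; case: ifP => HK.
    have -> : (Negz j + (K : nat)%:Z - n%:Z = Negz (n + j - K))%R by lia.
    by rewrite IH // /h /hmode /xmul -scalerAl mulrA.
  have [Kn|nK] := ltnP K n; first by rewrite bin_small // scale0r.
  have -> : (Negz j + (K : nat)%:Z - n%:Z = Posz (K - n - j - 1))%R.
    move: HK; rewrite nK /= => /negbT; rewrite -ltnNge => HK; lia.
  by rewrite IH // /hmode /xmul mulr0 scaler0.
rewrite -(big_mkord xpredT (fun K => if (n <= K <= n + j)%N then h K else 0)).
rewrite (@big_cat_nat _ _ _ n) //=; last by lia.
rewrite big1_seq ?add0r; last first.
  by move=> K; rewrite mem_index_iota => /andP[_ /andP[_ HK]]; rewrite leqNgt HK.
rewrite (@big_cat_nat _ _ _ (n + j).+1) //=; last by lia.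
rewrite [X in _ + X]big1_seq ?addr0; last first.
  move=> K; rewrite mem_index_iota => /andP[_ /andP[HK _]].
  by rewrite ifF //; apply/negbTE; rewrite negb_and -!ltnNge HK orbT.
rewrite -{1}(add0n n) big_addn.
have -> : ((n + j).+1 - n = j.+1)%N by lia.
rewrite big_mkord mulr_suml; apply eq_bigr => r _.
have rj := ltn_ord r; rewrite ifT; last by apply/andP; split; lia.
by rewrite /h (addnC r n) subnDl.
Qed.


Lemma count_vars (m : Mn) (j : VV) : count_mem j (vars m) = m j.
Proof.
rewrite /vars count_flatten -map_comp.
rewrite (@eq_map _ _ _ (fun k => (k == j) * m k)%N); last by move=> k /=; rewrite count_nseq.
rewrite sumnE big_map.
have [jin|jout] := boolP (j \in finsupp (cmonom_val m)).
  rewrite (big_fsetD1 j) //= eqxx mul1n big1_fset ?addn0 // => k.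
  by rewrite in_fsetD1 => /andP[/negbTE -> _] _; rewrite mul0n.
rewrite big1_fset; last first.
  by move=> k kin _; case: eqP => [e|]; [rewrite -e kin in jout|rewrite mul0n].
by rewrite (fsfun_dflt jout).
Qed.

Definition mprod (s : seq VV) : Mn := \big[@mulcm _/@onecm _]_(j <- s) ucm j.

Lemma mprodE s j : mprod s j = count_mem j s.
Proof.
elim: s => [|k s IH]; first by rewrite /mprod big_nil onecmE.
by rewrite /mprod big_cons mulcmE -/(mprod s) IH ucmE.
Qed.

Lemma mprod_vars m : mprod (vars m) = m.
Proof. by apply/eqP/cmP => j; rewrite mprodE count_vars. Qed.

Lemma E0 s : E s 0 = << mprod s >>.
Proof.
elim: s => [|[i n] s IH] /=.
  by rewrite /mprod big_nil -mpolyC1E.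
rewrite big_ord1 /= addn0 binn scale1r IH /mprod big_cons monU1M.
done.
Qed.

Lemma E0_vars m : E (vars m) 0 = << m >>.
Proof. by rewrite E0 mprod_vars. Qed.

Lemma perm2 (s : seq VV) x y : perm_eq s [:: x; y] -> s = [:: x; y] \/ s = [:: y; x].
Proof.
move=> ps; have := perm_size ps; case: s ps => [|a [|b [|]]] //= ps _.
have : a \in [:: x; y] by rewrite -(perm_mem ps) mem_head.
rewrite !inE => /orP[/eqP ea|/eqP ea]; subst a.
  left; move: ps; rewrite perm_cons => ps.
  by have := perm_mem ps b; rewrite !inE eqxx => /esym/eqP ->.
right; have : perm_eq [:: y; b] [:: y; x].
  by apply: (perm_trans ps); rewrite (perm_catC [:: x] [:: y]).
rewrite perm_cons => ps2.
by have := perm_mem ps2 b; rewrite !inE eqxx => /esym/eqP ->.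
Qed.

Lemma vars2 (x y : VV) : vars (mulcm (ucm x) (ucm y)) = [:: x; y] \/
                         vars (mulcm (ucm x) (ucm y)) = [:: y; x].
Proof.
apply: perm2; rewrite /perm_eq; apply/allP => k _ /=.
by rewrite count_vars mulcmE !ucmE addn0.
Qed.


Lemma sum_first1 (V : zmodType) (n : nat) (f : 'I_n.+1 -> V) :
  (forall i : 'I_n, f (lift ord0 i) = 0) -> \sum_(i < n.+1) f i = f ord0.
Proof. by move=> h; rewrite big_ord_recl big1 ?addr0. Qed.

Lemma sum_first2 (V : zmodType) (n : nat) (f : 'I_n.+2 -> V) :
  (forall i : 'I_n, f (lift ord0 (lift ord0 i)) = 0) ->
  \sum_(i < n.+2) f i = f ord0 + f (lift ord0 ord0).
Proof. by move=> h; rewrite big_ord_recl big_ord_recl big1 ?addr0. Qed.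

Lemma starm_closed (I : pred 'I_l) m v : all (fun j : VV => I j.1) (vars m) ->
  avoid I v -> starm m v = << m >> * v.
Proof.
move=> Is av; rewrite /starm sum_first1 => [|i].
  rewrite bin0 scale1r /ymode (ymodeL_closed _ _ Is _ _ av).
  have -> : ((@ord0 (wtm m) : nat)%:Z - 1 = Negz 0)%R by [].
  by rewrite E0_vars.
rewrite /ymode (ymodeL_closed _ _ Is _ _ av).
have -> : ((lift ord0 i : nat)%:Z - 1 = Posz i)%R by rewrite !lift0; lia.
by rewrite scaler0.
Qed.

Lemma circm_closed (I : pred 'I_l) m v : all (fun j : VV => I j.1) (vars m) ->
  avoid I v -> (0 < wtm m)%N ->
  circm m v = (E (vars m) 1 + << m >> *+ wtm m) * v.
Proof.
move=> Is av; rewrite /circm; case E1: (wtm m) => [|w] // _.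
rewrite sum_first2 => [|i].
  rewrite bin0 bin1 scale1r /ymode !(ymodeL_closed _ _ Is _ _ av).
  have -> : ((@ord0 w.+1 : nat)%:Z - 2 = Negz 1)%R by [].
  have -> : ((lift ord0 (@ord0 w) : nat)%:Z - 2 = Negz 0)%R by [].
  by rewrite E0_vars scaler_nat mulrDl -mulrnAl.
rewrite /ymode (ymodeL_closed _ _ Is _ _ av).
have -> : ((lift ord0 (lift ord0 i) : nat)%:Z - 2 = Posz i)%R by rewrite !lift0; lia.
by rewrite scaler0.
Qed.


Lemma E_nil0 : E [::] 0 = 1. Proof. by []. Qed.
Lemma E_nil1 : E [::] 1 = 0. Proof. by []. Qed.
Lemma E_cons1 i n s :
  E ((i, n) :: s) 1 = X (i, n) * E s 1 + X (i, n.+1) * E s 0 *+ n.+1.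
Proof.
cbn [E]; rewrite sum_first2 => [|[]] //.
rewrite /= addn0 binn scale1r addn1 binSn scaler_nat.
by [].
Qed.
Lemma E_cons0 i n s : E ((i, n) :: s) 0 = X (i, n) * E s 0.
Proof. by cbn [E]; rewrite sum_first1 => [|[]] //; rewrite /= addn0 binn scale1r. Qed.

Lemma E2_1 (x y : VV) : E [:: x; y] 1 =
  X x * X (y.1, y.2.+1) *+ y.2.+1 + X (x.1, x.2.+1) * X y *+ x.2.+1.
Proof.
case: x => i n; case: y => j k.
rewrite E_cons1 E_cons1 E_cons0 E_nil1 E_nil0 /=.
move: (X (i, n)) (X (j, k)) (X (i, n.+1)) (X (j, k.+1)) => a b c d.
ring.
Qed.

Lemma wtm2 (x y : VV) : wtm (mulcm (ucm x) (ucm y)) = (x.2.+1 + y.2.+1)%N.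
Proof. by rewrite /wtm; case: (vars2 x y) => ->; rewrite /wtl /= ?addn0 // addnC. Qed.

Lemma E1_2 (x y : VV) : E (vars (mulcm (ucm x) (ucm y))) 1 =
  X x * X (y.1, y.2.+1) *+ y.2.+1 + X (x.1, x.2.+1) * X y *+ x.2.+1.
Proof.
case: (vars2 x y) => ->; rewrite E2_1 //.
move: (X x) (X y) (X (y.1, y.2.+1)) (X (x.1, x.2.+1)) => a b c d.
ring.
Qed.

Lemma Hplus2 (x y : VV) : Hplus (<< mulcm (ucm x) (ucm y) >> : F).
Proof.
rewrite /Hplus theta_lin linU.
have -> : mdeg (mulcm (ucm x) (ucm y)) = 2%N.
  by rewrite (mdegM (ucm x) (ucm y)) !mdegU.
by rewrite expr2 mulrNN mulr1 scale1r.
Qed.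

Lemma avoid2 (I : pred 'I_l) (x y : VV) : ~~ I x.1 -> ~~ I y.1 ->
  avoid I << mulcm (ucm x) (ucm y) >>.
Proof.
move=> Ix Iy m; rewrite msuppU1 in_fset1 => /eqP -> j Ij.
rewrite mulcmE !ucmE.
have -> : (x == j) = false by apply/negbTE; apply: contraNneq Ix => ->.
have -> : (y == j) = false by apply/negbTE; apply: contraNneq Iy => ->.
by [].
Qed.

Lemma all2 (I : pred 'I_l) (x y : VV) : I x.1 -> I y.1 ->
  all (fun j : VV => I j.1) (vars (mulcm (ucm x) (ucm y))).
Proof. by move=> Ix Iy; case: (vars2 x y) => ->; rewrite /= Ix Iy. Qed.


Lemma O0 : OHplus (0 : F).
Proof. by exists [::]; split => [uv|]; rewrite ?big_nil. Qed.

Lemma OD {x y : F} : OHplus x -> OHplus y -> OHplus (x + y).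
Proof.
move=> [s1 [H1 ->]] [s2 [H2 ->]]; exists (s1 ++ s2); split; last by rewrite big_cat.
by move=> uv; rewrite mem_cat => /orP[/H1|/H2].
Qed.

Lemma OZ (c : C) {x : F} : OHplus x -> OHplus (c *: x).
Proof.
move=> [s [H ->]]; exists (map (fun uv => (c *: uv.1, uv.2)) s); split.
  move=> uv /mapP [[u v] /H [Hu [d Hd] Hv] ->] /=; split => //.
    by rewrite /Hplus theta_lin linZ -theta_lin Hu.
  by exists d => m /(fsubsetP (msuppZ_le c u)) /Hd.
rewrite big_map scaler_sumr; apply eq_bigr => [[u v]] _ /=.
by rewrite !zcirc_lin linZ.
Qed.

Lemma ON {x : F} : OHplus x -> OHplus (- x).
Proof. by move=> h; rewrite -scaleN1r; apply: OZ. Qed.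

Lemma OB {x y : F} : OHplus x -> OHplus y -> OHplus (x - y).
Proof. by move=> hx hy; apply: OD => //; apply: ON. Qed.

Lemma OMn {x : F} n : OHplus x -> OHplus (x *+ n).
Proof. by move=> h; elim: n => [|n IH]; [rewrite mulr0n; apply: O0|rewrite mulrS; apply: OD]. Qed.

Lemma OE {x y : F} : x = y -> OHplus x -> OHplus y.
Proof. by move=> ->. Qed.

Lemma pairrel (x y z w : 'I_l) (p q r s : nat) :
  x != y -> z != x -> z != y -> w != x -> w != y ->
  OHplus ((X (x, p.+1) * X (y, q) *+ p.+1 + X (x, p) * X (y, q.+1) *+ q.+1
           + X (x, p) * X (y, q) *+ (p + q).+2) * (X (z, r) * X (w, s))).
Proof.
move=> xy zx zy wx wy.
set mu := mulcm (ucm (x, p)) (ucm (y, q)).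
set nu := mulcm (ucm (z, r)) (ucm (w, s)).
pose I := fun k : 'I_l => (k == x) || (k == y).
have avI : avoid I << nu >> by apply: avoid2; rewrite /I /= negb_or ?zx ?zy ?wx ?wy.
have allI : all (fun j : VV => I j.1) (vars mu) by apply: all2; rewrite /I /= eqxx ?orbT.
exists [:: (<< mu >>, << nu >>)]; split.
  move=> uv; rewrite in_cons in_nil orbF => /eqP -> /=; split.
  - exact: Hplus2.
  - by exists (wtm mu) => m; rewrite msuppU1 in_fset1 => /eqP ->.
  - exact: Hplus2.
rewrite big_seq1 /= zcirc_lin linU (circm_closed _ _ _ allI avI); last by rewrite wtm2.
rewrite E1_2 wtm2 /= !monU1M -[<< ucm (x,p) >>]/(X (x,p)) -[<< ucm (y,q) >>]/(X (y,q)) -[<< ucm (z,r) >>]/(X (z,r)) -[<< ucm (w,s) >>]/(X (w,s)).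
move: (X (x, p)) (X (y, q)) (X (x, p.+1)) (X (y, q.+1)) (X (z, r)) (X (w, s)) => a b c d e f.
have -> : (p.+1 + q.+1 = (p + q).+2)%N by lia.
ring.
Qed.


Lemma ne_sym {T : eqType} {u v : T} : u != v -> v != u.
Proof. by rewrite eq_sym. Qed.

Lemma single (x y z w : 'I_l) (p q r s : nat) :
  x != y -> x != z -> x != w -> y != z -> y != w -> z != w ->
  OHplus ((X (x, p.+1) + X (x, p)) * X (y, q) * X (z, r) * X (w, s)).
Proof.
move=> xy xz xw yz yw zw.
have h1 := pairrel x y z w p q r s xy (ne_sym xz) (ne_sym yz) (ne_sym xw) (ne_sym yw).
have h2 := pairrel x z y w p r q s xz (ne_sym xy) yz (ne_sym xw) (ne_sym zw).
have h3 := pairrel y z x w q r p s yz xy xz (ne_sym yw) (ne_sym zw).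
have := OZ ((p.+1 * 2)%:R^-1) (OB (OD h1 h2) h3).
apply: OE.
set T := (X (x, p.+1) + X (x, p)) * X (y, q) * X (z, r) * X (w, s).
rewrite -[X in _ *: X = _](_ : T *+ (p.+1 * 2) = _); last first.
  rewrite /T.
  move: (X (x, p.+1)) (X (x, p)) (X (y, q)) (X (z, r)) (X (w, s))
        (X (y, q.+1)) (X (z, r.+1)) => a b c d e f g.
  have -> : ((p + q).+2 = p + q + 2)%N by lia.
  have -> : ((p + r).+2 = p + r + 2)%N by lia.
  have -> : ((q + r).+2 = q + r + 2)%N by lia.
  ring.
rewrite -(@scaler_nat C F) scalerA mulVf ?scale1r //.
by rewrite Num.Theory.pnatr_eq0.
Qed.


Lemma Osign {v : F} n : OHplus v -> OHplus ((-1) ^+ n * v).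
Proof.
move=> h; elim: n => [|n IH]; first by rewrite expr0 mul1r.
by rewrite exprS mulN1r mulNr; apply: ON.
Qed.

Lemma red1 (x y z w : 'I_l) (p q r s : nat) :
  x != y -> x != z -> x != w -> y != z -> y != w -> z != w ->
  OHplus (X (x, p) * X (y, q) * X (z, r) * X (w, s)
          - (-1) ^+ p * (X (x, 0) * X (y, q) * X (z, r) * X (w, s))).
Proof.
move=> xy xz xw yz yw zw; elim: p => [|p IH].
  apply: (OE _ O0).
  move: (X (x, 0)) (X (y, q)) (X (z, r)) (X (w, s)) => a b c d; ring.
apply: (OE _ (OB (single x y z w p q r s xy xz xw yz yw zw) IH)).
rewrite exprS.
move: (X (x, 0)) (X (y, q)) (X (z, r)) (X (w, s)) (X (x, p)) (X (x, p.+1)) ((-1) ^+ p : F) => a b c d e f g; ring.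
Qed.

Lemma red4 (x y z w : 'I_l) (p q r s : nat) :
  x != y -> x != z -> x != w -> y != z -> y != w -> z != w ->
  OHplus (X (x, p) * X (y, q) * X (z, r) * X (w, s)
          - (-1) ^+ (p + q + r + s) * (X (x, 0) * X (y, 0) * X (z, 0) * X (w, 0))).
Proof.
move=> xy xz xw yz yw zw.
have h1 := red1 x y z w p q r s xy xz xw yz yw zw.
have h2 := red1 y x z w q 0 r s (ne_sym xy) yz yw xz xw zw.
have h3 := red1 z x y w r 0 0 s (ne_sym xz) (ne_sym yz) zw xy xw yw.
have h4 := red1 w x y z s 0 0 0 (ne_sym xw) (ne_sym yw) (ne_sym zw) xy xz yz.
apply: (OE _ (OD (OD (OD h1 (Osign p h2)) (Osign (p + q) h3)) (Osign (p + q + r) h4))).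
rewrite !exprD.
move: (X (x, 0)) (X (y, 0)) (X (z, 0)) (X (w, 0)) (X (x, p)) (X (y, q)) (X (z, r)) (X (w, s))
  ((-1) ^+ p : F) ((-1) ^+ q : F) ((-1) ^+ r : F) ((-1) ^+ s : F) => a b c d e f g h i j k m.
ring.
Qed.

Lemma Oint {v : F} (k : int) : OHplus v -> OHplus (k%:~R * v).
Proof.
move=> h; rewrite mulrzl; case: k => n; first exact: OMn.
by rewrite NegzE mulrNz; apply: ON; apply: OMn.
Qed.

Definition Cb (x y : 'I_l) (a2 a3 a4 a5 : int) : F :=
  a2%:~R * (X (x, 0) * X (y, 1)) + a3%:~R * (X (x, 0) * X (y, 2))
  + a4%:~R * (X (x, 0) * X (y, 3)) + a5%:~R * (X (x, 0) * X (y, 4)).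

Lemma comb (x y z w : 'I_l) (a2 a3 a4 a5 b2 b3 b4 b5 : int) :
  x != y -> x != z -> x != w -> y != z -> y != w -> z != w ->
  OHplus (Cb x y a2 a3 a4 a5 * Cb z w b2 b3 b4 b5
     - ((a2 - a3 + a4 - a5) * (b2 - b3 + b4 - b5))%:~R
        * (X (x, 0) * X (y, 0) * X (z, 0) * X (w, 0))).
Proof.
move=> xy xz xw yz yw zw.
apply: (OE _ (OD (OD (OD (OD (OD (OD (OD (OD (OD (OD (OD (OD (OD (OD (OD (Oint (a2 * b2) (red4 x y z w 0 1 0 1 xy xz xw yz yw zw))
   (Oint (a2 * b3) (red4 x y z w 0 1 0 2 xy xz xw yz yw zw)))
   (Oint (a2 * b4) (red4 x y z w 0 1 0 3 xy xz xw yz yw zw)))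
   (Oint (a2 * b5) (red4 x y z w 0 1 0 4 xy xz xw yz yw zw)))
   (Oint (a3 * b2) (red4 x y z w 0 2 0 1 xy xz xw yz yw zw)))
   (Oint (a3 * b3) (red4 x y z w 0 2 0 2 xy xz xw yz yw zw)))
   (Oint (a3 * b4) (red4 x y z w 0 2 0 3 xy xz xw yz yw zw)))
   (Oint (a3 * b5) (red4 x y z w 0 2 0 4 xy xz xw yz yw zw)))
   (Oint (a4 * b2) (red4 x y z w 0 3 0 1 xy xz xw yz yw zw)))
   (Oint (a4 * b3) (red4 x y z w 0 3 0 2 xy xz xw yz yw zw)))
   (Oint (a4 * b4) (red4 x y z w 0 3 0 3 xy xz xw yz yw zw)))
   (Oint (a4 * b5) (red4 x y z w 0 3 0 4 xy xz xw yz yw zw)))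
   (Oint (a5 * b2) (red4 x y z w 0 4 0 1 xy xz xw yz yw zw)))
   (Oint (a5 * b3) (red4 x y z w 0 4 0 2 xy xz xw yz yw zw)))
   (Oint (a5 * b4) (red4 x y z w 0 4 0 3 xy xz xw yz yw zw)))
   (Oint (a5 * b5) (red4 x y z w 0 4 0 4 xy xz xw yz yw zw)))).
rewrite /Cb.
move: (X (x, 0)) (X (y, 0)) (X (z, 0)) (X (w, 0)) (X (y, 1)) (X (y, 2)) (X (y, 3)) (X (y, 4))
  (X (w, 1)) (X (w, 2)) (X (w, 3)) (X (w, 4)) => x0 y0 z0 w0 y1 y2 y3 y4 w1 w2 w3 w4.
ring.
Qed.


Definition suppI (I : pred 'I_l) (x : F) :=
  forall m, m \in msupp x -> all (fun j : VV => I j.1) (vars m).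

Lemma suppD I u v : suppI I u -> suppI I v -> suppI I (u + v).
Proof.
move=> hu hv m /(fsubsetP (msuppD_le u v)); rewrite in_fsetU => /orP[/hu|/hv] //.
Qed.

Lemma suppZ I c u : suppI I u -> suppI I (c *: u).
Proof. by move=> hu m /(fsubsetP (msuppZ_le c u)) /hu. Qed.

Lemma supp2 (I : pred 'I_l) (x y : VV) : I x.1 -> I y.1 ->
  suppI I << mulcm (ucm x) (ucm y) >>.
Proof. by move=> Ix Iy m; rewrite msuppU1 in_fset1 => /eqP ->; apply: all2. Qed.

Lemma avoidD I u v : avoid I u -> avoid I v -> avoid I (u + v).
Proof.
move=> hu hv m /(fsubsetP (msuppD_le u v)); rewrite in_fsetU => /orP[/hu|/hv] //.
Qed.

Lemma avoidZ I c u : avoid I u -> avoid I (c *: u).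
Proof. by move=> hu m /(fsubsetP (msuppZ_le c u)) /hu. Qed.

Lemma zstar_prod (I : pred 'I_l) (x y : F) : suppI I x -> avoid I y ->
  zstar x y = x * y.
Proof.
move=> hx hy; rewrite zstar_lin /lin.
rewrite (eq_big_seq (fun m => (x@_m *: << m >>) * y)); last first.
  by move=> m hm; rewrite (starm_closed _ _ _ (hx m hm) hy) scalerAl.
rewrite -mulr_suml.
have ex : x = \sum_(m <- msupp x) x@_m *: << m >>.
  by rewrite {1}(monalgE x); apply eq_bigr => m _; rewrite malgUZ.
rewrite [X in _ = X * y]ex. reflexivity. Qed.


Lemma SvE x y k : Sv x y k.+1 = X (x, 0%N) * X (y, k).
Proof. by rewrite /Sv monU1M; reflexivity. Qed.

Lemma EuE x y : Eu x y = Cb x y 5 25 36 16.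
Proof.
rewrite /Eu /Cb !SvE !(@scaler_nat C F).
move: (X (x, 0%N)) (X (y, 1%N)) (X (y, 2%N)) (X (y, 3%N)) (X (y, 4%N)) => a b c d e.
ring.
Qed.

Lemma EtE x y : Et x y = Cb x y (-48) (-224) (-304) (-128).
Proof.
rewrite /Et /Cb !SvE scaleNr !(@scaler_nat C F).
move: (X (x, 0%N)) (X (y, 1%N)) (X (y, 2%N)) (X (y, 3%N)) (X (y, 4%N)) => a b c d e.
ring.
Qed.

Lemma LamE x y : Lam x y = Cb x y 45 190 240 96.
Proof.
rewrite /Lam /Cb !SvE !(@scaler_nat C F).
move: (X (x, 0%N)) (X (y, 1%N)) (X (y, 2%N)) (X (y, 3%N)) (X (y, 4%N)) => a b c d e.
ring.
Qed.

Lemma OE0 {u v : F} (k : int) : k = 0 -> OHplus (u - k%:~R * v) -> OHplus u.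
Proof. by move=> ->; rewrite mul0r subr0. Qed.

Lemma OE1 {u v : F} (k : int) : k = 1 -> OHplus (u - k%:~R * v) -> OHplus (u - v).
Proof. by move=> ->; rewrite mul1r. Qed.


Definition dist4 (x y z w : 'I_l) :=
  [/\ x != y, x != z, x != w & [/\ y != z, y != w & z != w]].

Lemma Luu {x y z w} : dist4 x y z w -> OHplus (Eu x y * Eu z w).
Proof.
case=> xy xz xw [yz yw zw]; rewrite !EuE.
by apply: (OE0 _ _ (comb _ _ _ _ _ _ _ _ _ _ _ _ xy xz xw yz yw zw)); reflexivity.
Qed.
Lemma Lut {x y z w} : dist4 x y z w -> OHplus (Eu x y * Et z w).
Proof.
case=> xy xz xw [yz yw zw]; rewrite EuE EtE.
by apply: (OE0 _ _ (comb _ _ _ _ _ _ _ _ _ _ _ _ xy xz xw yz yw zw)); reflexivity.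
Qed.
Lemma Ltu {x y z w} : dist4 x y z w -> OHplus (Et x y * Eu z w).
Proof.
case=> xy xz xw [yz yw zw]; rewrite EuE EtE.
by apply: (OE0 _ _ (comb _ _ _ _ _ _ _ _ _ _ _ _ xy xz xw yz yw zw)); reflexivity.
Qed.
Lemma Ltt {x y z w} : dist4 x y z w -> OHplus (Et x y * Et z w).
Proof.
case=> xy xz xw [yz yw zw]; rewrite !EtE.
by apply: (OE0 _ _ (comb _ _ _ _ _ _ _ _ _ _ _ _ xy xz xw yz yw zw)); reflexivity.
Qed.
Lemma LuL {x y z w} : dist4 x y z w -> OHplus (Eu x y * Lam z w).
Proof.
case=> xy xz xw [yz yw zw]; rewrite EuE LamE.
by apply: (OE0 _ _ (comb _ _ _ _ _ _ _ _ _ _ _ _ xy xz xw yz yw zw)); reflexivity.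
Qed.
Lemma LtL {x y z w} : dist4 x y z w -> OHplus (Et x y * Lam z w).
Proof.
case=> xy xz xw [yz yw zw]; rewrite EtE LamE.
by apply: (OE0 _ _ (comb _ _ _ _ _ _ _ _ _ _ _ _ xy xz xw yz yw zw)); reflexivity.
Qed.
Lemma LLL {x y z w} : dist4 x y z w -> OHplus (Lam x y * Lam z w - Sxy x y * Sxy z w).
Proof.
case=> xy xz xw [yz yw zw]; rewrite !LamE /Sxy !SvE mulrA.
exact: (OE1 _ erefl (comb x y z w 45 190 240 96 45 190 240 96 xy xz xw yz yw zw)).
Qed.


Lemma scaleAlF (c : C) (u v : F) : c *: u * v = c *: (u * v).
Proof. by rewrite scalerAl. Qed.
Lemma scaleArF (c : C) (u v : F) : u * (c *: v) = c *: (u * v).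
Proof. by rewrite scalerAr. Qed.

Lemma Obil4 (u1 u2 u3 u4 v : F) (c1 c2 c3 c4 : C) :
  OHplus (u1 * v) -> OHplus (u2 * v) -> OHplus (u3 * v) -> OHplus (u4 * v) ->
  OHplus ((c1 *: u1 + c2 *: u2 + c3 *: u3 + c4 *: u4) * v).
Proof.
move=> h1 h2 h3 h4.
apply: (OE _ (OD (OD (OD (OZ c1 h1) (OZ c2 h2)) (OZ c3 h3)) (OZ c4 h4))).
rewrite !scalerAl !mulrDl; reflexivity.
Qed.

Lemma Obil4r (u v1 v2 v3 v4 : F) (c1 c2 c3 c4 : C) :
  OHplus (u * v1) -> OHplus (u * v2) -> OHplus (u * v3) -> OHplus (u * v4) ->
  OHplus (u * (c1 *: v1 + c2 *: v2 + c3 *: v3 + c4 *: v4)).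
Proof.
move=> h1 h2 h3 h4.
apply: (OE _ (OD (OD (OD (OZ c1 h1) (OZ c2 h2)) (OZ c3 h3)) (OZ c4 h4))).
rewrite !scalerAr !mulrDr; reflexivity.
Qed.

Lemma Obar (u w v : F) (e : C) :
  OHplus (u * w) -> OHplus (u * v) -> OHplus (u * (w + e *: v)).
Proof.
move=> h1 h2; apply: (OE _ (OD h1 (OZ e h2))).
rewrite scalerAr mulrDr; reflexivity.
Qed.

Lemma suppEu (I : pred 'I_l) x y : I x -> I y -> suppI I (Eu x y).
Proof.
move=> Ix Iy; rewrite /Eu /Sv.
by apply: suppD; [apply: suppD; [apply: suppD|]|]; apply: suppZ; apply: supp2.
Qed.
Lemma suppEt (I : pred 'I_l) x y : I x -> I y -> suppI I (Et x y).
Proof.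
move=> Ix Iy; rewrite /Et /Sv; apply: suppZ.
by apply: suppD; [apply: suppD; [apply: suppD|]|]; apply: suppZ; apply: supp2.
Qed.
Lemma suppLam (I : pred 'I_l) x y : I x -> I y -> suppI I (Lam x y).
Proof.
move=> Ix Iy; rewrite /Lam /Sv.
by apply: suppD; [apply: suppD; [apply: suppD|]|]; apply: suppZ; apply: supp2.
Qed.
Lemma suppS (I : pred 'I_l) x y : I x -> I y -> suppI I (Sxy x y).
Proof. by move=> Ix Iy; rewrite /Sxy /Sv; apply: supp2. Qed.

Lemma avEu (I : pred 'I_l) x y : ~~ I x -> ~~ I y -> avoid I (Eu x y).
Proof.
move=> Ix Iy; rewrite /Eu /Sv.
by apply: avoidD; [apply: avoidD; [apply: avoidD|]|]; apply: avoidZ; apply: avoid2.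
Qed.
Lemma avEt (I : pred 'I_l) x y : ~~ I x -> ~~ I y -> avoid I (Et x y).
Proof.
move=> Ix Iy; rewrite /Et /Sv; apply: avoidZ.
by apply: avoidD; [apply: avoidD; [apply: avoidD|]|]; apply: avoidZ; apply: avoid2.
Qed.
Lemma avLam (I : pred 'I_l) x y : ~~ I x -> ~~ I y -> avoid I (Lam x y).
Proof.
move=> Ix Iy; rewrite /Lam /Sv.
by apply: avoidD; [apply: avoidD; [apply: avoidD|]|]; apply: avoidZ; apply: avoid2.
Qed.
Lemma avS (I : pred 'I_l) x y : ~~ I x -> ~~ I y -> avoid I (Sxy x y).
Proof. by move=> Ix Iy; rewrite /Sxy /Sv; apply: avoid2. Qed.

Lemma supp_inM (I : pred 'I_l) x y v : I x -> I y -> inM x y v -> suppI I v.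
Proof.
move=> Ix Iy [c1 [c2 [c3 [c4 ->]]]].
apply: suppD; [apply: suppD; [apply: suppD|]|]; apply: suppZ.
- exact: suppEu. - exact: suppEu. - exact: suppEt. - exact: suppEt.
Qed.
Lemma av_inM (I : pred 'I_l) x y v : ~~ I x -> ~~ I y -> inM x y v -> avoid I v.
Proof.
move=> Ix Iy [c1 [c2 [c3 [c4 ->]]]].
apply: avoidD; [apply: avoidD; [apply: avoidD|]|]; apply: avoidZ.
- exact: avEu. - exact: avEu. - exact: avEt. - exact: avEt.
Qed.
Lemma supp_inMbar (I : pred 'I_l) x y v : I x -> I y -> inMbar x y v -> suppI I v.
Proof.
move=> Ix Iy [w [e [hw ->]]]; apply: suppD; first exact: (supp_inM _ _ _ _ Ix Iy hw).
by apply: suppZ; apply: suppLam.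
Qed.
Lemma av_inMbar (I : pred 'I_l) x y v : ~~ I x -> ~~ I y -> inMbar x y v -> avoid I v.
Proof.
move=> Ix Iy [w [e [hw ->]]]; apply: avoidD; first exact: (av_inM _ _ _ _ Ix Iy hw).
by apply: avoidZ; apply: avLam.
Qed.


Lemma main_dev (a b c d : 'I_l) :
  uniq [:: a; b; c; d] ->
  (forall x y : Fock l, inM a b x -> inMbar c d y ->
      OHplus (zstar x y) /\ OHplus (zstar y x))
  /\ OHplus (zstar (Lam a b) (Lam c d) - zstar (Sxy a b) (Sxy c d)).
Proof.
move=> /= /and4P[ha hb hc _].
move: ha hb hc; rewrite !in_cons !in_nil !orbF !negb_or => ha hb cd.
case/and3P: ha => ab ac ad; case/andP: hb => bc bd.
pose I1 := fun k : 'I_l => (k == a) || (k == b).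
pose I2 := fun k : 'I_l => (k == c) || (k == d).
have I1a : I1 a by rewrite /I1 eqxx.
have I1b : I1 b by rewrite /I1 eqxx orbT.
have I2c : I2 c by rewrite /I2 eqxx.
have I2d : I2 d by rewrite /I2 eqxx orbT.
have I1c : ~~ I1 c by rewrite /I1 negb_or !(eq_sym c) ac bc.
have I1d : ~~ I1 d by rewrite /I1 negb_or !(eq_sym d) ad bd.
have I2a : ~~ I2 a by rewrite /I2 negb_or ac ad.
have I2b : ~~ I2 b by rewrite /I2 negb_or bc bd.
have D1 : dist4 a b c d by split => //; split.
have D2 : dist4 b a c d by split => //; exact: ne_sym.
have D3 : dist4 a b d c by split => //; split => //; exact: ne_sym.
have D4 : dist4 b a d c by split => //; [exact: ne_sym|split => //; exact: ne_sym].
split.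
  move=> x y hx hy.
  have sx := supp_inM _ _ _ _ I1a I1b hx.
  have ax := av_inM _ _ _ _ I2a I2b hx.
  have sy := supp_inMbar _ _ _ _ I2c I2d hy.
  have ay := av_inMbar _ _ _ _ I1c I1d hy.
  rewrite (zstar_prod _ _ _ sx ay) (zstar_prod _ _ _ sy ax) (mulrC y x).
  suff h : OHplus (x * y) by split.
  case: hx => [c1 [c2 [c3 [c4 ->]]]]; case: hy => [w [e [[d1 [d2 [d3 [d4 ->]]]] ->]]].
  apply: Obil4; (apply: Obar; [apply: Obil4r|]).
  - exact: (Luu D1). - exact: (Luu D3). - exact: (Lut D1). - exact: (Lut D3). - exact: (LuL D1).
  - exact: (Luu D2). - exact: (Luu D4). - exact: (Lut D2). - exact: (Lut D4). - exact: (LuL D2).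
  - exact: (Ltu D1). - exact: (Ltu D3). - exact: (Ltt D1). - exact: (Ltt D3). - exact: (LtL D1).
  - exact: (Ltu D2). - exact: (Ltu D4). - exact: (Ltt D2). - exact: (Ltt D4). - exact: (LtL D2).
rewrite (zstar_prod _ _ _ (suppLam _ _ _ I1a I1b) (avLam _ _ _ I1c I1d)).
rewrite (zstar_prod _ _ _ (suppS _ _ _ I1a I1b) (avS _ _ _ I1c I1d)).
exact: (LLL D1).
Qed.

End Dev.

Theorem lemma5p3 (l : nat) (a b c d : 'I_l) :
  uniq [:: a; b; c; d] ->
  (forall x y : Fock l, inM a b x -> inMbar c d y ->
      OHplus (zstar x y) /\ OHplus (zstar y x))
  /\ OHplus (zstar (Lam a b) (Lam c d) - zstar (Sxy a b) (Sxy c d)).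
Proof. exact: main_dev. Qed.
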